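(* Let $n\ge1$ and let $\Phi:\mathbb{R}^{n+1}\to[0,+\infty)$ be a norm with dual norm $\Phi^o$. Then $\Phi(\widehat\xi,\xi_{n+1})\ge\Phi(\widehat\xi,0)$ for all $(\widehat\xi,\xi_{n+1})\in\mathbb{R}^n\times\mathbb{R}$ if and only if $\Phi^o(\widehat\xi^*,\xi^*_{n+1})\ge\Phi^o(\widehat\xi^*,0)$ for all $(\widehat\xi^*,\xi^*_{n+1})\in\mathbb{R}^n\times\mathbb{R}$.
   Context: A norm on $\mathbb{R}^m$ is a convex function $\Psi:\mathbb{R}^m\to[0,+\infty)$ with $\Psi(\lambda\xi)=|\lambda|\Psi(\xi)$ and $\Psi(\xi)\ge c|\xi|$ for some $c>0$; its dual norm is $\Psi^o(\xi^* )=\sup\{\xi^*\cdot\xi:\Psi(\xi)\le1\}$. (The stated property of $\Phi$ is what the paper calls ''$\partial B_\Phi$ is a generalized graph in the vertical direction''.) *)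

(* Defs.v *)
From HB Require Import structures.
From mathcomp Require Import all_boot all_order all_algebra.
From mathcomp Require Import boolp classical_sets reals.
Set Implicit Arguments. Unset Strict Implicit. Unset Printing Implicit Defensive.
Import Order.TTheory GRing.Theory Num.Theory.
Local Open Scope ring_scope.
Local Open Scope classical_set_scope.

Definition dotv (R : realType) (m : nat) (x y : 'rV[R]_m) : R :=
  \sum_(i < m) x ord0 i * y ord0 i.

Definition eucl (R : realType) (m : nat) (x : 'rV[R]_m) : R :=
  Num.sqrt (dotv x x).

Definition is_norm (R : realType) (m : nat) (Psi : 'rV[R]_m -> R) : Prop :=
  [/\ (forall x, 0 <= Psi x),
      (forall (l : R) x y, 0 <= l <= 1 ->
          Psi (l *: x + (1 - l) *: y) <= l * Psi x + (1 - l) * Psi y),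
      (forall (l : R) x, Psi (l *: x) = `|l| * Psi x) &
      (exists2 c : R, 0 < c & forall x, c * eucl x <= Psi x)].

Definition dual_norm (R : realType) (m : nat) (Psi : 'rV[R]_m -> R)
  (xs : 'rV[R]_m) : R :=
  sup [set dotv xs x | x in [set x | Psi x <= 1]].

Definition pt (R : realType) (n : nat) (xh : 'rV[R]_n) (t : R) : 'rV[R]_(n + 1) :=
  row_mx xh (\row_(j < 1) t).

(* Main.v *)
Require Import Defs.
From HB Require Import structures.
From mathcomp Require Import all_boot all_order all_algebra.
From mathcomp Require Import boolp classical_sets reals.
From mathcomp Require Import ring lra.
Import Order.TTheory GRing.Theory Num.Theory.
Local Open Scope ring_scope.
Local Open Scope classical_set_scope.

Definition infr (R : realType) (f : R -> R) : R := inf (range f).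
Arguments infr {R}.

Lemma infr_le (R : realType) (f : R -> R) (a t : R) :
  (forall u, a <= f u) -> infr f <= f t.
Proof.
move=> H; rewrite /infr; apply: ge_inf; last by exists t.
by exists a => _ [u _ <-].
Qed.

Lemma infr_ge (R : realType) (f : R -> R) (a : R) :
  (forall u, a <= f u) -> a <= infr f.
Proof.
move=> H; apply: lb_le_inf; first by exists (f 0), 0.
by move=> _ [u _ <-].
Qed.

Definition sublin (R : realType) (m : nat) (p : 'rV[R]_m -> R) :=
  (forall x y, p (x + y) <= p x + p y) /\
  (forall (l : R) x, 0 <= l -> p (l *: x) = l * p x).
Arguments sublin {R m}.

Set Implicit Arguments.
Section SL.
Context (R : realType) (m : nat).
Implicit Types (p : 'rV[R]_m -> R) (x y e : 'rV[R]_m).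

Lemma sl0 p : sublin p -> p 0 = 0.
Proof. by case=> _ H; rewrite -(scale0r (0 : 'rV[R]_m)) H // mul0r. Qed.

Lemma sl_neg p x : sublin p -> 0 <= p x + p (- x).
Proof. move=> hp; have := hp.1 x (- x); by rewrite subrr sl0. Qed.

Lemma sl_line p e (t : R) : sublin p -> t * p e <= p (t *: e).
Proof.
move=> hp; have [t0|t0] := leP 0 t; first by rewrite hp.2.
have h1 := sl_neg (t *: e) hp.
have h2 : p (- (t *: e)) = - t * p e by rewrite -scaleNr hp.2 // oppr_ge0 ltW.
rewrite h2 in h1; lra.
Qed.

Lemma sl_low p x e (t : R) : sublin p ->
  - p (- x) <= p (x + t *: e) - t * p e.
Proof.
move=> hp; have h1 := sl_line e t hp.
have h2 := hp.1 (x + t *: e) (- x).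
rewrite addrAC subrr add0r in h2; lra.
Qed.

Definition shift p e x := infr (fun t => p (x + t *: e) - t * p e).
Arguments shift : clear implicits.

Lemma sh_le p e x : sublin p -> shift p e x <= p x.
Proof.
move=> hp; have := @infr_le _ (fun t => p (x + t *: e) - t * p e) (- p (- x)) 0.
rewrite scale0r addr0 mul0r subr0; apply => u; exact: sl_low.
Qed.

Lemma sh_ge p e x : sublin p -> - p (- x) <= shift p e x.
Proof. move=> hp; rewrite /shift; apply: infr_ge => u; exact: sl_low. Qed.

Lemma sh_lb p e x (a : R) :
  (forall t, a <= p (x + t *: e) - t * p e) -> a <= shift p e x.
Proof. exact: infr_ge. Qed.

Lemma sh_le_f p e x t : sublin p -> shift p e x <= p (x + t *: e) - t * p e.
Proof. move=> hp; rewrite /shift; apply: (@infr_le _ _ (- p (- x))) => u; exact: sl_low. Qed.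

Lemma sh_sub p e x y : sublin p -> shift p e (x + y) <= shift p e x + shift p e y.
Proof.
move=> hp; rewrite -lerBlDr; apply: sh_lb => t1.
rewrite lerBlDr -lerBlDl; apply: sh_lb => t2.
rewrite lerBlDl.
apply: (le_trans (sh_le_f _ _ (t1 + t2) hp)).
have := hp.1 (x + t1 *: e) (y + t2 *: e).
rewrite scalerDl.
have -> : x + t1 *: e + (y + t2 *: e) = x + y + (t1 *: e + t2 *: e).
  by rewrite addrACA.
lra.
Qed.

Lemma sh_0 p e : sublin p -> shift p e 0 = 0.
Proof.
move=> hp; apply/eqP; rewrite eq_le; apply/andP; split.
  by rewrite -(sl0 hp) sh_le.
by have := sh_ge e 0 hp; rewrite oppr0 (sl0 hp) oppr0.
Qed.

Lemma sh_hom p e (l : R) x : sublin p -> 0 <= l ->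
  shift p e (l *: x) = l * shift p e x.
Proof.
move=> hp; rewrite le_eqVlt => /orP[/eqP <-|l0].
  by rewrite scale0r mul0r sh_0.
apply/eqP; rewrite eq_le; apply/andP; split.
  rewrite -ler_pdivrMl //; apply: sh_lb => t.
  rewrite ler_pdivrMl //.
  apply: (le_trans (sh_le_f _ _ (l * t) hp)).
  rewrite -scalerA -scalerDr (hp.2 _ _ (ltW l0)); lra.
apply: sh_lb => u.
have h := sh_le_f e x (u / l) hp.
have -> : l *: x + u *: e = l *: (x + (u / l) *: e).
  by rewrite scalerDr scalerA mulrCA divff ?gt_eqF // mulr1.
rewrite (hp.2 _ _ (ltW l0)).
apply: (le_trans (ler_wpM2l (ltW l0) h)).
by rewrite mulrBr mulrA mulrCA divff ?gt_eqF // mulr1.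
Qed.

Lemma sh_e p e x (s : R) : sublin p ->
  shift p e (x + s *: e) = shift p e x + s * p e.
Proof.
move=> hp; apply/eqP; rewrite eq_le; apply/andP; split.
  rewrite -lerBlDr; apply: sh_lb => t.
  rewrite lerBlDr.
  apply: (le_trans (sh_le_f _ _ (t - s) hp)).
  rewrite -addrA -scalerDl addrCA subrr addr0; lra.
apply: sh_lb => u.
have := sh_le_f e x (s + u) hp.
rewrite -addrA -scalerDl; lra.
Qed.

Lemma sh_pres p e e' (c : R) : sublin p ->
  (forall x (t : R), p (x + t *: e') = p x + t * c) ->
  forall x (t : R), shift p e (x + t *: e') = shift p e x + t * c.
Proof.
move=> hp hc x t; apply/eqP; rewrite eq_le; apply/andP; split.
  rewrite -lerBlDr; apply: sh_lb => u.
  rewrite lerBlDr.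
  apply: (le_trans (sh_le_f _ _ u hp)).
  rewrite addrAC hc; lra.
apply: sh_lb => u.
have := sh_le_f e x u hp.
rewrite addrAC hc; lra.
Qed.

Lemma sh_sublin p e : sublin p -> sublin (shift p e).
Proof. move=> hp; split => *; [exact: sh_sub | exact: sh_hom]. Qed.

End SL.
Unset Implicit Arguments.

Lemma lin_const (R : realType) (m : nat) (q : 'rV[R]_m -> R) e (c : R) :
  sublin q -> (forall x (t : R), q (x + t *: e) = q x + t * c) -> c = q e.
Proof.
move=> hq h; have := h 0 1; rewrite scale1r add0r (sl0 hq) add0r mul1r.
by move=> ->.
Qed.

Arguments lin_const {R m q e c}.

Lemma HB_aux (R : realType) (m : nat) (s : seq 'I_m) :
  forall p : 'rV[R]_m -> R, sublin p -> exists q : 'rV[R]_m -> R,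
   [/\ sublin q, (forall x, q x <= p x),
    (forall e (c : R), (forall x (t : R), p (x + t *: e) = p x + t * c) ->
        forall x (t : R), q (x + t *: e) = q x + t * c) &
    (forall i, i \in s -> forall x (t : R),
        q (x + t *: delta_mx 0 i) = q x + t * q (delta_mx 0 i))].
Proof.
elim: s => [|i s IH] p hp.
  by exists p; split.
have hp' := sh_sublin (delta_mx 0 i) hp.
have [q [hq qle qpres qi]] := IH _ hp'.
exists q; split => //.
- by move=> x; apply: le_trans (qle x) (sh_le _ _ hp).
- by move=> e c hc; apply: qpres; apply: sh_pres.
move=> j; rewrite inE => /orP[/eqP ->|js]; last exact: qi.
have hq1 := qpres _ _ (fun x t => sh_e (delta_mx 0 i) x t hp).
by rewrite -(lin_const hq hq1).
Qed.
Arguments HB_aux {R m} s {p}.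

Lemma HB (R : realType) (m : nat) (p : 'rV[R]_m -> R) (z : 'rV[R]_m) :
  sublin p -> exists y : 'rV[R]_m,
    (forall x, dotv y x <= p x) /\ dotv y z = p z.
Proof.
move=> hp.
have hp0 := sh_sublin z hp.
have [q [hq qle qpres qi]] := HB_aux (enum 'I_m) hp0.
have qz := qpres _ _ (fun x t => sh_e z x t hp).
pose y : 'rV[R]_m := \row_i q (delta_mx 0 i).
have qlin : forall x, q x = dotv y x.
  move=> x; rewrite {1}(row_sum_delta x) /dotv.
  apply: (big_rec2 (fun a b => q a = b)); first exact: sl0.
  move=> j a b _ <-; rewrite addrC qi ?mem_enum // mxE mulrC.
  by rewrite addrC.
exists y; split.
  by move=> x; rewrite -qlin; apply: le_trans (qle x) (sh_le _ _ hp).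
rewrite -qlin; have := qz 0 1; rewrite add0r scale1r (sl0 hq) add0r mul1r.
by [].
Qed.

Lemma norm_sublin (R : realType) (m : nat) (Phi : 'rV[R]_m -> R) :
  is_norm Phi -> sublin Phi.
Proof.
case=> h0 hc hh _; split; last first.
  by move=> l x l0; rewrite hh ger0_norm.
move=> x y.
have := hc (2^-1) (2 *: x) (2 *: y).
have e1 : 1 - 2^-1 = 2^-1 :> R by field.
rewrite e1 !scalerA mulVf ?pnatr_eq0 // !scale1r !hh ger0_norm //.
by rewrite !mulrA mulVf ?pnatr_eq0 // !mul1r; apply; rewrite invr_ge0 invf_le1; lra.
Qed.

Lemma coord_le (R : realType) (m : nat) (x : 'rV[R]_m) i : `|x 0 i| <= eucl x.
Proof.
rewrite /eucl -sqrtr_sqr ler_wsqrtr // /dotv (bigD1 i) //= expr2 lerDl.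
by apply: sumr_ge0 => j _; rewrite -expr2 sqr_ge0.
Qed.

Lemma dot_le (R : realType) (m : nat) (y x : 'rV[R]_m) :
  dotv y x <= (\sum_(i < m) `|y 0 i|) * eucl x.
Proof.
rewrite /dotv mulr_suml; apply: ler_sum => i _.
apply: (le_trans (ler_norm _)); rewrite normrM.
by apply: ler_wpM2l => //; apply: coord_le.
Qed.

Lemma dotvZ (R : realType) (m : nat) (y x : 'rV[R]_m) (a : R) :
  dotv y (a *: x) = a * dotv y x.
Proof.
by rewrite /dotv mulr_sumr; apply: eq_bigr => i _; rewrite mxE mulrCA.
Qed.

Lemma dotv0 (R : realType) (m : nat) (y : 'rV[R]_m) : dotv y 0 = 0.
Proof. by rewrite -(scale0r (0 : 'rV[R]_m)) dotvZ mul0r. Qed.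

Arguments coord_le {R m}.
Arguments dot_le {R m}.
Arguments dotvZ {R m}.
Arguments dotv0 {R m}.
Arguments norm_sublin {R m Phi}.

Section Dual.
Context (R : realType) (m : nat) (Phi : 'rV[R]_m -> R) (hN : is_norm Phi).

Lemma phi_le_K (y x : 'rV[R]_m) : exists K, forall x, dotv y x <= K * Phi x.
Proof.
case: (hN) => _ _ _ [c c0 hc]; exists ((\sum_(i < m) `|y 0 i|) / c) => z.
apply: (le_trans (dot_le y z)).
rewrite -mulrA; apply: ler_wpM2l; first by apply: sumr_ge0.
by rewrite ler_pdivlMl // mulrC.
Qed.

Lemma D_ub (y : 'rV[R]_m) :
  has_ubound [set dotv y x | x in [set x | Phi x <= 1]].
Proof.
have [K hK] := phi_le_K y y.
case: (hN) => h0 _ _ _.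
exists `|K| => _ [x /= hx <-].
apply: (le_trans (hK x)); apply: (le_trans (ler_norm _)); rewrite normrM.
by apply: ler_piMr => //; rewrite ger0_norm.
Qed.

Lemma D3 (y x : 'rV[R]_m) : Phi x <= 1 -> dotv y x <= dual_norm Phi y.
Proof. by move=> hx; apply: ub_le_sup; [exact: D_ub | exists x]. Qed.

Lemma D2 (y : 'rV[R]_m) (a : R) :
  (forall x, Phi x <= 1 -> dotv y x <= a) -> dual_norm Phi y <= a.
Proof.
move=> H; apply: ge_sup.
  exists 0, 0; [by rewrite /= (sl0 (norm_sublin hN)) ler01 | exact: dotv0].
by move=> _ [x /= hx <-]; apply: H.
Qed.

Lemma D4 (y x : 'rV[R]_m) : dotv y x <= dual_norm Phi y * Phi x.
Proof.
have hs := norm_sublin hN.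
case: (hN) => h0 _ _ _.
have [p0|pp] := eqVneq (Phi x) 0.
  have [K hK] := phi_le_K y y.
  have := hK x; rewrite p0 !mulr0 //.
have ppos : 0 < Phi x by rewrite lt0r pp h0.
have := D3 y ((Phi x)^-1 *: x).
rewrite dotvZ hs.2 ?invr_ge0 ?h0 // mulVf // lexx => /(_ isT).
by rewrite ler_pdivrMl // mulrC.
Qed.

End Dual.

Lemma dot_pt (R : realType) (n : nat) (b a : 'rV[R]_n) (s t : R) :
  dotv (pt b s) (pt a t) = dotv b a + s * t.
Proof.
rewrite /dotv /pt big_split_ord /= big_ord1; congr (_ + _).
  by apply: eq_bigr => i _; rewrite !row_mxEl.
by rewrite !row_mxEr !mxE.
Qed.

Lemma pt_dec (R : realType) (n : nat) (x : 'rV[R]_(n + 1)) :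
  x = pt (lsubmx x) (rsubmx x 0 0).
Proof.
rewrite /pt -{1}[x]hsubmxK; congr row_mx.
by apply/rowP => j; rewrite !mxE ord1.
Qed.

Local Close Scope classical_set_scope.
Arguments pt_dec {R n}.
Arguments dot_pt {R n}.
Arguments HB {R m p}.
Arguments D4 {R m Phi}.

Theorem lemmaA3 (R : realType) (n : nat) (Phi : 'rV[R]_(n + 1) -> R) :
  (1 <= n)%N -> is_norm Phi ->
  (forall (xh : 'rV[R]_n) (t : R), Phi (pt xh t) >= Phi (pt xh 0)) <->
  (forall (xh : 'rV[R]_n) (t : R),
      dual_norm Phi (pt xh t) >= dual_norm Phi (pt xh 0)).
Proof.
move=> _ hN; have hs := norm_sublin hN.
case: (hN) => h0 _ _ _.
split.
  move=> H b s; apply: D2 => // x hx.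
  rewrite (pt_dec x) dot_pt.
  set a := lsubmx x; set t := rsubmx x 0 0.
  have -> : dotv b a + 0 * t = dotv (pt b s) (pt a 0) by rewrite dot_pt mulr0 mul0r.
  apply: D3 => //; apply: le_trans (H a t) _; by rewrite -pt_dec.
move=> H a t.
have [y [hy hyz]] := HB (pt a 0) hs.
have dy : dual_norm Phi y <= 1.
  by apply: D2 => // x hx; apply: le_trans (hy x) hx.
move: hy hyz dy; rewrite (pt_dec y).
set b := lsubmx y; set s := rsubmx y 0 0 => hy hyz dy.
rewrite -hyz dot_pt mulr0.
have -> : dotv b a + 0 = dotv (pt b 0) (pt a t) by rewrite dot_pt mul0r.
apply: (le_trans (D4 hN _ _)).
apply: ler_piMl => //.
exact: le_trans (H b s) dy.
Qed.
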